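(* Let $G$ be an infinite discrete countable group, $(X,G)$ a $G$-system with metric $d$, $\gamma\in(0,1)$ and $K\in\mathbb{N}\setminus\{1\}$. Assume there is $\epsilon>0$ such that for every $M\in\mathbb{N}$ and all nonempty open subsets $U_1,\dots,U_M$ of $X$ there exist $g\in G$, $\mathcal{M}\subset\{1,\dots,M\}$ and points $x_{m,k}\in U_m$ for $k\in\{1,\dots,K\}$, $m\in\mathcal{M}$, such that (1) $|\mathcal{M}|\ge(1-\gamma)M$; (2) $d(gx_{m,k},gx_{m,k'})>\epsilon$ for all $1\le k<k'\le K$ and $m\in\mathcal{M}$. Then $h^*_{top}(X,G)\ge\log((1-\gamma)K)$.
   Context: A $G$-system is a compact metric space $(X,d)$ on which $G$ acts by homeomorphisms. For a sequence $\mathcal{A}=(g_n)$ in $G$ and a finite open cover $\mathcal{U}$, $h_{top}^{\mathcal{A}}(G,\mathcal{U})=\limsup_n\frac1n\log N(\bigvee_{i=1}^ng_i^{-1}\mathcal{U})$ ($N$ = minimal cardinality of a subcover), $h^{\mathcal{A}}_{top}(X,G)=\sup_{\mathcal{U}}h^{\mathcal{A}}_{top}(G,\mathcal{U})$, and $h^*_{top}(X,G)=\sup_{\mathcal{A}}h^{\mathcal{A}}_{top}(X,G)$ over all sequences in $G$. *)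

(* Defs.v *)
From HB Require Import structures.
From mathcomp Require Import all_boot all_order all_algebra.
From mathcomp Require Import all_classical all_reals.
From mathcomp Require Import ereal topology normedtype sequences exp.
Set Implicit Arguments. Unset Strict Implicit. Unset Printing Implicit Defensive.
Import Order.TTheory GRing.Theory Num.Theory.
Local Open Scope classical_set_scope.
Local Open Scope ring_scope.

Section Defs.
Variable R : realType.

Definition is_metric (X : Type) (d : X -> X -> R) : Prop :=
  (forall x y, 0 <= d x y) /\ (forall x y, d x y = 0 <-> x = y) /\
  (forall x y, d x y = d y x) /\ (forall x y z, d x z <= d x y + d y z).

Definition open_d (X : Type) (d : X -> X -> R) (U : set X) : Prop :=
  forall x, U x -> exists e : R, 0 < e /\ forall y, d x y < e -> U y.

Definition compact_d (X : Type) (d : X -> X -> R) : Prop :=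
  forall (I : Type) (F : I -> set X), (forall i, open_d d (F i)) ->
    (forall x, exists i, F i x) ->
    exists (n : nat) (f : nat -> I), forall x, exists k, (k < n)%N /\ F (f k) x.

Definition continuous_d (X : Type) (d : X -> X -> R) (f : X -> X) : Prop :=
  forall U, open_d d U -> open_d d (f @^-1` U).

Definition is_group (G : Type) (mul : G -> G -> G) (inv : G -> G) (one : G) : Prop :=
  (forall a b c, mul a (mul b c) = mul (mul a b) c) /\
  (forall a, mul one a = a) /\ (forall a, mul a one = a) /\
  (forall a, mul (inv a) a = one) /\ (forall a, mul a (inv a) = one).

(* G acts on X by homeomorphisms (continuity of each act g suffices,
   since act (inv g) is a continuous inverse) *)
Definition is_action (G X : Type) (d : X -> X -> R) (mul : G -> G -> G) (one : G)
  (act : G -> X -> X) : Prop :=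
  (forall x, act one x = x) /\
  (forall g h x, act (mul g h) x = act g (act h x)) /\
  (forall g, continuous_d d (act g)).

Definition fin_open_cover (X : Type) (d : X -> X -> R) (U : set (set X)) : Prop :=
  finite_set U /\ (forall V, U V -> open_d d V) /\ (forall x, exists V, U V /\ V x).

Definition Ncov (X : Type) (V : set (set X)) : R :=
  inf [set (n%:R : R) | n in [set n : nat | exists F : nat -> set X,
         (forall i, (i < n)%N -> V (F i)) /\
         (forall x, exists i, (i < n)%N /\ F i x)]].

(* \bigvee_{i=1}^n g_i^{-1} U, with g_1, ..., g_n = A 0, ..., A (n-1) *)
Definition join_cover (G X : Type) (act : G -> X -> X) (A : nat -> G)
  (U : set (set X)) (n : nat) : set (set X) :=
  [set W | exists f : nat -> set X, (forall i, (i < n)%N -> U (f i)) /\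
     W = \bigcap_(i in [set i : nat | (i < n)%N]) (act (A i) @^-1` f i)].

Definition hA_cover (G X : Type) (act : G -> X -> X) (A : nat -> G)
  (U : set (set X)) : \bar R :=
  limn_esup (fun n : nat =>
    ((ln (Ncov (join_cover act A U n.+1)) / (n.+1)%:R)%:E)).

Definition hA_top (G X : Type) (d : X -> X -> R) (act : G -> X -> X) (A : nat -> G)
  : \bar R :=
  ereal_sup [set hA_cover act A U | U in [set U | fin_open_cover d U]].

Definition hstar_top (G X : Type) (d : X -> X -> R) (act : G -> X -> X) : \bar R :=
  ereal_sup [set hA_top d act A | A in [set: nat -> G]].

End Defs.

(* Main.v *)
Require Import Defs.
From HB Require Import structures.
From mathcomp Require Import all_boot all_order all_algebra.
From mathcomp Require Import all_classical all_reals.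
From mathcomp Require Import ereal topology normedtype sequences exp.
From mathcomp Require Import lra.
Import Order.TTheory GRing.Theory Num.Theory.
Local Open Scope classical_set_scope.
Local Open Scope ring_scope.

Section Helpers.
Variable R : realType.

Lemma fin_pos_lb (T : finType) (P : pred T) (h : T -> R) :
  (forall t, P t -> 0 < h t) -> exists r : R, 0 < r /\ forall t, P t -> r <= h t.
Proof.
move=> hp.
suff: forall s : seq T, exists r : R, 0 < r /\ forall t, t \in s -> P t -> r <= h t.
  by case/(_ (enum T)) => r [r0 hr]; exists r; split => // t; apply: hr; rewrite mem_enum.
elim=> [|a s [r [r0 hr]]]; first by exists 1; split.
case Pa: (P a).
  exists (Order.min r (h a)); split; first by rewrite lt_min r0 hp.
  move=> t; rewrite inE => /orP[/eqP -> _|ts Pt]; first by rewrite ge_min lexx orbT.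
  by rewrite ge_min hr.
exists r; split => // t; rewrite inE => /orP[/eqP -> |ts Pt]; first by rewrite Pa.
exact: hr.
Qed.

Variables (X : Type) (d : X -> X -> R).
Hypothesis dm : is_metric d.

Lemma ball_open x r : open_d d [set y | d x y < r].
Proof.
case: dm => _ [_ [_ tri]].
move=> y /= hy; exists (r - d x y); split; first by rewrite subr_gt0.
move=> z hz; apply: (le_lt_trans (tri x y z)); by rewrite -ltrBrDl.
Qed.

Lemma openI (A B : set X) : open_d d A -> open_d d B -> open_d d (A `&` B).
Proof.
move=> oA oB x [Ax Bx]; case: (oA x Ax) => e1 [e10 h1]; case: (oB x Bx) => e2 [e20 h2].
exists (Order.min e1 e2); split; first by rewrite lt_min e10 e20.
by move=> y; rewrite lt_min => /andP[y1 y2]; split; [apply: h1|apply: h2].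
Qed.

Lemma open_bigcap n (P : nat -> set X) : (forall i, (i < n)%N -> open_d d (P i)) ->
  open_d d (\bigcap_(i in [set i | (i < n)%N]) P i).
Proof.
move=> oP x Px.
suff: exists e : R, 0 < e /\ forall y, d x y < e -> forall i, (i < n)%N -> P i y.
  by case=> e [e0 he]; exists e; split => // y /he.
elim: n oP Px => [|n IH] oP Px; first by exists 1; split.
case: IH => [i lin|i /= lin|e [e0 he]].
- by apply: oP; rewrite ltnS ltnW.
- by apply: Px => /=; rewrite ltnS ltnW.
case: (oP n (ltnSn n) x (Px n (ltnSn n))) => e2 [e20 h2].
exists (Order.min e e2); split; first by rewrite lt_min e0 e20.
move=> y; rewrite lt_min => /andP[y1 y2] i; rewrite ltnS leq_eqVlt => /orP[/eqP ->|lin].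
  exact: h2.
exact: he.
Qed.

End Helpers.
Theorem proposition3p1 (R : realType) (G : Type) (mul : G -> G -> G) (inv : G -> G)
  (one : G) (X : Type) (d : X -> X -> R) (act : G -> X -> X)
  (gamma : R) (K : nat) :
  is_group mul inv one ->
  infinite_set [set: G] -> countable [set: G] ->
  is_metric d -> compact_d d -> is_action d mul one act ->
  0 < gamma < 1 -> (1 < K)%N ->
  (exists eps : R, 0 < eps /\
    forall (M : nat) (U : 'I_M -> set X),
      (forall m, U m !=set0 /\ open_d d (U m)) ->
      exists (g : G) (MM : {set 'I_M}) (x : 'I_M -> 'I_K -> X),
        (1 - gamma) * M%:R <= (#|MM|)%:R /\
        (forall m, m \in MM -> forall k, U m (x m k)) /\
        (forall m, m \in MM -> forall k k' : 'I_K, (k < k')%N ->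
           eps < d (act g (x m k)) (act g (x m k')))) ->
  ((ln ((1 - gamma) * K%:R))%:E <= hstar_top d act)%E.
Proof.
move=> _ _ _ dm cpt [_ [_ actC]] /andP[ga0 ga1] K1 [eps [eps0 H]].
have dm' := dm; case: dm' => d0 [d0E [dsym tri]].
have dxx : forall x, d x x = 0 by move=> x; apply/d0E.
pose c := (1 - gamma) * K%:R.
have c0 : 0 < c by rewrite /c mulr_gt0 ?subr_gt0 // ltr0n (ltn_trans _ K1).
have [x0 _] : exists x : X, True.
  apply: contrapT => nx.
  have [n [f _]] := cpt False (fun i => match i with end) (fun i => match i with end)
    (fun x => False_ind _ (nx (ex_intro _ x I))).
  by case: (f 0).
have [gG _] : exists g : G, True.
  case: (H 0 (fun _ => set0)) => [[]//|g _]; by exists g.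
have [p [fc hfc]] : exists (p : nat) (fc : nat -> X),
    forall x, exists k, (k < p)%N /\ d (fc k) x < eps / 2.
  apply: (cpt X (fun x => [set y | d x y < eps / 2])).
    by move=> x; exact: ball_open.
  by move=> x; exists x => /=; rewrite dxx divr_gt0.
pose U := (fun k => [set y | d (fc k) y < eps / 2]) @` `I_p.
have Uopen : forall V, U V -> open_d d V by move=> V [k _ <-]; exact: ball_open.
have Ucov : forall x, exists V, U V /\ V x.
  by move=> x; case: (hfc x) => k [kp hk]; exists [set y | d (fc k) y < eps / 2]; split => //; exists k.
have Ufin : fin_open_cover d U.
  split; first exact/finite_image/finite_II.
  by split.
have Udiam : forall V y z, U V -> V y -> V z -> d y z < eps.
  move=> V y z [k _ <-] /= hy hz.
  apply: (le_lt_trans (tri y (fc k) z)); rewrite dsym.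
  by rewrite [eps]splitr ltrD.
pose st := {T : finType & T -> set X}.
pose valid (s : st) := forall t : projT1 s, projT2 s t !=set0 /\ open_d d (projT2 s t).
have step : forall s : st, exists q : G * st, valid s ->
  [/\ valid q.2, c * #|projT1 s|%:R <= #|projT1 q.2|%:R &
     forall t t' : projT1 q.2, t != t' -> forall y z, projT2 q.2 t y -> projT2 q.2 t' z ->
       eps < d (act q.1 y) (act q.1 z) \/
       exists u u' : projT1 s, u != u' /\ projT2 s u y /\ projT2 s u' z].
  move=> [T V].
  case: (pselect (valid (existT _ T V))); last first.
    by move=> nv; exists (gG, existT _ T V).
  move=> vs.
  pose M := #|T|.
  pose UU := fun m : 'I_M => V (enum_val m).
  have [g [MM [x [hcard [hin hsep]]]]] := H M UU (fun m => vs (enum_val m)).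
  have [r [r0 hr]] := @fin_pos_lb R _
    (fun q : 'I_M * 'I_K * 'I_K => (q.1.1 \in MM) && (q.1.2 < q.2)%N)
    (fun q => (d (act g (x q.1.1 q.1.2)) (act g (x q.1.1 q.2)) - eps) / 2)
    (fun q hq => ltac:(case/andP: hq => h1 h2; rewrite divr_gt0 // subr_gt0; exact: hsep)).
  pose T' := ({m : 'I_M | m \in MM} * 'I_K)%type.
  pose V' := fun q : T' => UU (val q.1) `&`
     (act g @^-1` [set y | d (act g (x (val q.1) q.2)) y < r]).
  exists (g, existT (fun T : finType => T -> set X) T' V') => _ /=.
  split.
  - move=> [[m hm] k] /=; split.
      exists (x m k); split; first exact: hin.
      by rewrite /= dxx.
    apply: openI => //; first by case: (vs (enum_val m)).
    by apply: actC; exact: ball_open.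
  - rewrite card_prod card_sig natrM.
    have -> : #|[pred m | m \in MM]| = #|MM| by apply: eq_card.
    by rewrite /c mulrAC card_ord ler_wpM2r.
  - move=> [[m hm] k] [[m' hm'] k'] ne y z [Uy By] [Uz Bz] /=.
    case: (eqVneq m m') => [emm|nmm]; last first.
      right; exists (enum_val m), (enum_val m'); split; last by split.
      by rewrite (inj_eq enum_val_inj).
    subst m'; left.
    have hmm : hm = hm' by apply: bool_irrelevance.
    subst hm'.
    have nk : k != k' by apply: contra ne => /eqP ->.
    have D : 2 * r + eps <= d (act g (x m k)) (act g (x m k')).
      case: (ltngtP k k') => [lt|gt|eq].
      - have := hr (m, k, k') (ltac:(by rewrite /= hm lt)) => /=; lra.
      - have := hr (m, k', k) (ltac:(by rewrite /= hm gt)) => /=.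
        rewrite dsym; lra.
      - by move: nk; rewrite (val_inj eq) eqxx.
    move: By Bz => /= By Bz.
    have t1 := tri (act g (x m k)) (act g y) (act g (x m k')).
    have t2 := tri (act g y) (act g z) (act g (x m k')).
    have t3 := dsym (act g z) (act g (x m k')).
    lra.
case: (choice step) => f hf.
pose s0 : st := existT (fun T : finType => T -> set X) unit (fun _ => setT).
pose S := fun n => iter n (fun s => (f s).2) s0.
pose A := fun n => (f (S n)).1.
pose sep := fun n (s : st) => forall t t' : projT1 s, t != t' -> forall y z,
  projT2 s t y -> projT2 s t' z -> exists2 i, (i < n)%N & eps < d (act (A i) y) (act (A i) z).
have Inv : forall n, [/\ valid (S n), c ^+ n <= #|projT1 (S n)|%:R & sep n (S n)].
  elim=> [|n [vn cn sn]].
    split.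
    - by move=> t; split; [exists x0|move=> y _; exists 1].
    - by rewrite expr0 /= card_unit.
    - by move=> [] [].
  have [v1 c1 s1] := hf (S n) vn.
  split => //.
  - by rewrite exprS (le_trans _ c1) // ler_wpM2l // ltW.
  - move=> t t' ne y z hy hz.
    case: (s1 t t' ne y z hy hz) => [h|[u [u' [ne' [hu hu']]]]].
      by exists n.
    by case: (sn u u' ne' y z hu hu') => i lin hi; exists i => //; rewrite ltnS ltnW.
have Nlb : forall n (s : st), valid s -> sep n s ->
    #|projT1 s|%:R <= Ncov R (join_cover act A U n).
  move=> n [T V] vs ss; rewrite /Ncov; apply: lb_le_inf.
    pose I := {W : set X | join_cover act A U n W}.
    have hop : forall i : I, open_d d (sval i).
      move=> [W [fj [hfj eW]]] /=; rewrite eW; apply: open_bigcap => // i lin.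
      by apply: actC; apply: Uopen; exact: hfj.
    have hcv : forall x, exists i : I, sval i x.
      move=> x.
      have : forall i, exists V, U V /\ V (act (A i) x) by move=> i; exact: Ucov.
      case/choice => fj hfj.
      have jW : join_cover act A U n
          (\bigcap_(i in [set i : nat | (i < n)%N]) (act (A i) @^-1` fj i)).
        by exists fj; split => // i _; case: (hfj i).
      exists (exist _ _ jW) => /= i _; by case: (hfj i).
    have [N [ff hff]] := cpt I (@sval _ _) hop hcv.
    exists N%:R => //; exists N => //; exists (fun i => sval (ff i)); split => //.
    by move=> i _; exact: (svalP (ff i)).
  move=> _ [N [F [hF hcov]] <-]; rewrite ler_nat.
  have : forall t : T, exists i : 'I_N, exists y, V t y /\ F i y.
    move=> t; case: (vs t) => [[y hy] _]; case: (hcov y) => i [iN hi].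
    by exists (Ordinal iN), y.
  case/choice => h hh.
  rewrite -[N]card_ord; apply: (@leq_card _ _ h) => t t' eqh; apply/eqP/negPn/negP => ne.
  case: (hh t) => y [hy Fy]; case: (hh t') => z [hz Fz].
  case: (ss t t' ne y z hy hz) => i lin hi.
  case: (hF (h t) (ltn_ord _)) => fj [hfj Ee].
  rewrite -eqh Ee in Fz; rewrite Ee in Fy.
  have := Udiam _ _ _ (hfj i lin) (Fy i lin) (Fz i lin).
  by rewrite ltNge (ltW hi).
apply: (@le_trans _ _ (hA_top d act A)); last first.
  by apply: ereal_sup_ubound; exists A.
apply: (@le_trans _ _ (hA_cover R act A U)); last first.
  by apply: ereal_sup_ubound; exists U.
rewrite /hA_cover limn_esup_lim; apply: lime_ge; first exact: is_cvg_esups.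
apply: nearW => m.
apply: (@le_trans _ _ ((ln (Ncov R (join_cover act A U m.+1)) / (m.+1)%:R)%:E)); last first.
  by apply: ereal_sup_ubound; exists m => /=.
have [v1 c1 s1] := Inv m.+1.
have hN := Nlb _ _ v1 s1.
have cpos : 0 < c ^+ m.+1 by rewrite exprn_gt0.
rewrite lee_fin ler_pdivlMr //.
have -> : ln ((1 - gamma) * K%:R) * m.+1%:R = ln (c ^+ m.+1) by rewrite lnXn // mulr_natr.
rewrite ler_ln ?posrE //.
  exact: (le_trans c1 hN).
exact: (lt_le_trans cpos (le_trans c1 hN)).
Qed.
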